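(* Consider the input-output system $\dot{\mathbf x}=\mathbf F(\mathbf x,u):=\mathbf f(\mathbf x)+\hat{\mathbf e}_1 g(u,x_1)$, $u\in J$, satisfying assumption (A0). Let $\mathbf x^*(u)$, $u\in J$, be a continuously differentiable curve of steady states ($\mathbf F(\mathbf x^*(u),u)=\mathbf 0$) along which $\frac{\partial \mathbf F}{\partial\mathbf x}(\mathbf x^*(u),u)$ is nonsingular, and let $\mathbf J^*=\frac{\partial\mathbf f}{\partial\mathbf x}(\mathbf x^*(u))$. Fix $j\in\{1,\ldots,n\}$. Then: (1) (Flow) $\displaystyle \frac{\partial x_j^*}{\partial u}=\frac{(-1)^j\,\mathbf J^*[\hat 1,\hat j]}{\det \mathbf J^*}$; (2) (Activation) $\displaystyle \frac{\partial x_j^*}{\partial u}=\frac{(-1)^j(x_T-x_1^* )\,\mathbf J^*[\hat 1,\hat j]}{\det\big(\mathbf J^*-\hat{\mathbf e}_{11}[u+k_{\mathrm{on}}+k_{\mathrm{off}}]\big)}$; (3) (Inhibition) $\displaystyle \frac{\partial x_j^*}{\partial u}=\frac{(-1)^{j+1}x_1^*\,\mathbf J^*[\hat 1,\hat j]}{\det\big(\mathbf J^*-\hat{\mathbf e}_{11}[u+k_{\mathrm{on}}+k_{\mathrm{off}}]\big)}$.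
   Context: $\mathcal X\subset\mathbb R^n$, $J\subset\mathbb R$ is an interval, and $\mathbf f:\mathcal X\to\mathbb R^n$ is $C^1$, with every entry of $\frac{\partial\mathbf f}{\partial\mathbf x}$ of constant sign on $\mathcal X$ and negative diagonal entries. $\hat{\mathbf e}_1$ is the first standard basis vector and $\hat{\mathbf e}_{11}$ the matrix with $1$ in position $(1,1)$ and zeros elsewhere. The control term $g$ is one of: flow, $g(u,x_1)=u$; activation, $g(u,x_1)=(u+k_{\mathrm{on}})(x_T-x_1)-k_{\mathrm{off}}x_1$; inhibition, $g(u,x_1)=k_{\mathrm{on}}(x_T-x_1)-(u+k_{\mathrm{off}})x_1$, with constants $x_T,k_{\mathrm{on}},k_{\mathrm{off}}>0$. Assumption (A0): for every $u_0\in J$ there is $\mathbf x_0\in\mathcal X$ with $\mathbf F(\mathbf x_0,u_0)=\mathbf 0$ and $\frac{\partial\mathbf F}{\partial\mathbf x}(\mathbf x_0,u_0)$ of full rank. For a matrix $\mathbf M$, $\mathbf M[\hat 1,\hat j]$ is the determinant of $\mathbf M$ with row $1$ and column $j$ deleted. *)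

(* Defs.v *)
From HB Require Import structures.
From mathcomp Require Import all_boot all_order all_algebra.
From mathcomp Require Import all_classical all_reals all_analysis.
Set Implicit Arguments. Unset Strict Implicit. Unset Printing Implicit Defensive.
Import Order.TTheory GRing.Theory Num.Theory.
Import numFieldNormedType.Exports.
Local Open Scope classical_set_scope.
Local Open Scope ring_scope.

(* State space R^n with n = n'.+1 (row vectors); index ord0 is coordinate 1. *)

(* Jacobian matrix with the usual convention: Jac f x i j = d f_i / d x_j.
   (mathcomp-analysis' [jacobian] is lin1_mx ('d f x), i.e. its transpose.) *)
Definition Jac (R : realType) (n : nat) (f : 'rV[R]_n -> 'rV[R]_n) (x : 'rV[R]_n)
  : 'M[R]_n := (jacobian f x)^T.

Inductive ctrl_kind := Flow | Activation | Inhibition.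

Definition gctrl (R : realType) (c : ctrl_kind) (xT kon koff : R) (u x1 : R) : R :=
  match c with
  | Flow => u
  | Activation => (u + kon) * (xT - x1) - koff * x1
  | Inhibition => kon * (xT - x1) - (u + koff) * x1
  end.

Definition Fsys (R : realType) (n : nat) (f : 'rV[R]_n.+1 -> 'rV[R]_n.+1)
  (g : R -> R -> R) (x : 'rV[R]_n.+1) (u : R) : 'rV[R]_n.+1 :=
  f x + g u (x ord0 ord0) *: delta_mx ord0 ord0.

(* Derivative of a curve x : R -> V at u relative to the set J
   (one-sided at endpoints of an interval J). *)
Definition is_deriv_on (R : realType) (V : normedModType R) (J : set R)
  (x : R -> V) (u : R) (dx : V) : Prop :=
  (fun h : R => h^-1 *: (x (h + u) - x u)) @ within [set h | J (h + u)] 0^' --> dx.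

Definition minor1 (R : realType) (n : nat) (M : 'M[R]_n.+1) (j : 'I_n.+1) : R :=
  \det (row' ord0 (col' j M)).

Definition e11 (R : realType) (n : nat) : 'M[R]_n.+1 := delta_mx ord0 ord0.

(* Main.v *)
Require Import Defs.
From HB Require Import structures.
From mathcomp Require Import all_boot all_order all_algebra.
From mathcomp Require Import all_classical all_reals all_analysis.
Import Order.TTheory GRing.Theory Num.Theory.
Import numFieldNormedType.Exports.
Local Open Scope classical_set_scope.
Local Open Scope ring_scope.
From mathcomp Require Import ring lra.
Lemma alg (R : realType) (W : normedModType R) (h : R) (hn: h != 0) (A D : W) :
  D + h^-1 *: (A - h *: D) = h^-1 *: A.
Proof. by rewrite scalerBr scalerA mulVf // scale1r addrC subrK. Qed.

Lemma chain_within (R : realType) (V W : normedModType R) (F : set_system R)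
  {FF : Filter F} (phi : V -> W) (x : V) (y : R -> V) (d : V) :
  differentiable phi x ->
  (\forall h \near F, h != 0) -> F --> (0:R) ->
  (fun h => h^-1 *: (y h - x)) @ F --> d ->
  (fun h => h^-1 *: (phi (y h) - phi x)) @ F --> 'd phi x d.
Proof.
move=> dphi hne0 F0 qd.
have [q qE] : {q : R -> V | q = fun h => h^-1 *: (y h - x)} by eexists.
rewrite -qE in qd.
have yE : \forall h \near F, y h = x + h *: q h.
  near=> h; rewrite qE scalerA mulfV ?scale1r; first by rewrite addrC subrK.
  by near: h.
have /eqaddoP eo := diff_locally dphi.
have kq0 : (fun h => h *: q h) @ F --> (0:V).
  have F0' : (fun h : R => h) @ F --> (0:R) by [].
  have H := @cvgZ _ _ _ F FF _ _ _ _ F0' qd. rewrite scale0r in H. exact H.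
pose e := fun k : V => phi (k + x) - (phi x + 'd phi x k).
have eq1 : \forall h \near F,
    'd phi x (q h) + h^-1 *: e (h *: q h) = h^-1 *: (phi (y h) - phi x).
  near=> h; have hn : h != 0 by near: h.
  have -> : y h = h *: q h + x by rewrite qE scalerA mulfV // scale1r subrK.
  rewrite /e linearZ /= opprD addrA; exact: alg.
apply: cvg_trans; first exact: (near_eq_cvg eq1).
rewrite -(addr0 ('d phi x d)); apply: cvgD.
  exact: (@continuous_cvg _ _ _ F FF q ('d phi x) d (@diff_continuous _ _ _ _ _ dphi d) qd).
apply/cvgr0Pnorm_lt => eps eps0.
have M0 : 0 < `|d| + 1 by rewrite ltr_wpDl.
set M := `|d| + 1 in M0 *.
have qb : \forall h \near F, `|q h| < M.
  move/cvgrPdist_lt : qd => /(_ 1 ltr01); apply: filterS => h hd.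
  have -> : q h = d - (d - q h) by rewrite opprB addrC subrK.
  by apply: le_lt_trans (ler_normB _ _) _; rewrite /M ltrD2l.
have c0 : 0 < eps / M by rewrite divr_gt0.
have ekq := kq0 _ (eo _ c0).
near=> h.
have hn : h != 0 by near: h.
have Hq : `|q h| < M by near: h.
have He : `|e (h *: q h)| <= eps / M * `|h *: q h|.
  near: h; move: ekq; exact.
rewrite normrZ normfV.
apply: (le_lt_trans (y := eps / M * `|q h|)).
  have h0 : `|h|^-1 * `|e (h *: q h)| <= `|h|^-1 * (eps / M * `|h *: q h|).
    by rewrite ler_wpM2l // invr_ge0.
  by rewrite normrZ mulrCA mulKf ?normr_eq0 // in h0.
by rewrite -[ltRHS](divfK (lt0r_neq0 M0)) ltr_pM2l.
Unshelve. all: by end_near. Qed.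
Lemma proper_J (R : realType) (J : set R) (u : R) : is_interval J ->
  (exists a b, J a /\ J b /\ a < b) -> J u ->
  ProperFilter (within [set h | J (h + u)] (0:R)^').
Proof.
move=> iJ [a [b [Ja [Jb ab]]]] Ju.
apply: Build_ProperFilter_ex => P.
rewrite /within /dnbhs /within => /nbhs_ballP [e /= e0 He].
have Hh : forall h, h != 0 -> `|h| < e -> J (h + u) -> P h.
  move=> h hn he Jh; apply: (He h) => //.
  by rewrite /ball /= sub0r normrN.
have e20 : 0 < e / 2 by rewrite divr_gt0.
have e2e : e / 2 < e by lra.
case: (ltP u b) => ub.
  pose h := Num.min (e/2) (b - u).
  have h0 : 0 < h by rewrite lt_min e20 subr_gt0.
  have hb : h <= b - u by rewrite ge_min lexx orbT.
  have he : h <= e / 2 by rewrite ge_min lexx.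
  exists h; apply: Hh; first exact: lt0r_neq0.
    by rewrite gtr0_norm //; lra.
  by apply: (iJ u b) => //; apply/andP; split; lra.
have au : a < u by lra.
pose h := Num.min (e/2) (u - a).
have h0 : 0 < h by rewrite lt_min e20 subr_gt0.
have hb : h <= u - a by rewrite ge_min lexx orbT.
have he : h <= e / 2 by rewrite ge_min lexx.
exists (- h); apply: Hh; first by rewrite oppr_eq0 lt0r_neq0.
  by rewrite normrN gtr0_norm //; lra.
by apply: (iJ a u) => //; apply/andP; split; lra.
Qed.
Lemma diff_aff (R : realType) (n : nat) (a b : R) (x : 'rV[R]_n.+1) :
  differentiable (fun v : 'rV[R]_n.+1 => (a + b * v ord0 ord0) *: (delta_mx ord0 ord0 : 'rV[R]_n.+1)) x /\
  forall v, 'd (fun v : 'rV[R]_n.+1 => (a + b * v ord0 ord0) *: (delta_mx ord0 ord0 : 'rV[R]_n.+1)) x v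
     = (b * v ord0 ord0) *: delta_mx ord0 ord0.
Proof.
have @cl : {linear 'rV[R]_n.+1 -> R}.
  by exists (fun N : 'rV[R]_n.+1 => N ord0 ord0); do 2![eexists]; do ?[constructor];
     rewrite ?mxE// => ? *; rewrite ?mxE//; move=> ?; rewrite !mxE.
have clc : continuous cl by exact: (@coord_continuous R 1 n.+1 ord0 ord0).
have dcl : differentiable cl x by exact: linear_differentiable.
have kE : (fun v : 'rV[R]_n.+1 => a + b * v ord0 ord0) = cst a + b *: (cl : 'rV[R]_n.+1 -> R).
  by apply/funext => v.
have dk : differentiable (fun v : 'rV[R]_n.+1 => a + b * v ord0 ord0) x.
  by rewrite kE; apply: differentiableD; [exact: differentiable_cst | exact: differentiableZ].
have dkE : forall v, 'd (fun v : 'rV[R]_n.+1 => a + b * v ord0 ord0) x v = b * v ord0 ord0.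
  move=> v; rewrite kE diffD //; last exact: differentiableZ.
  by rewrite diffZ // diff_cst diff_lin //= add0r.
split; first exact: differentiableZl.
by move=> v; rewrite diffZl // dkE.
Qed.
Lemma linalg (R : realType) n (A : 'M[R]_n.+1) (v : 'rV[R]_n.+1) (c : R) (j : 'I_n.+1) :
  A \in unitmx -> v *m A^T = c *: delta_mx ord0 ord0 ->
  v ord0 j = c * ((-1) ^+ j * \det (row' ord0 (col' j A))) / \det A.
Proof.
move=> uA H.
have -> : v = (c *: delta_mx ord0 ord0) *m invmx A^T by rewrite -H mulmxK // unitmx_tr.
rewrite -scalemxAl -rowE -trmx_inv /invmx uA !mxE.
by rewrite /cofactor add0n mulrCA mulrC.
Qed.
Lemma path_cvg (R : realType) (V : normedModType R) (F : set_system R) {FF : Filter F}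
  (x : V) (y : R -> V) (d : V) :
  (\forall h \near F, h != 0) -> F --> (0:R) ->
  (fun h => h^-1 *: (y h - x)) @ F --> d -> y @ F --> x.
Proof.
move=> hne0 F0 qd.
have F0' : (fun h : R => h) @ F --> (0:R) by [].
have H := @cvgZ _ _ _ F FF _ _ _ _ F0' qd; rewrite scale0r in H.
have H2 := @cvgD _ _ _ F FF _ _ _ _ H (@cvg_cst _ x _ F FF); rewrite add0r in H2.
apply: cvg_trans H2; apply: near_eq_cvg; near=> h.
have hn : h != 0 by near: h.
change (h *: (h^-1 *: (y h - x)) + x = y h).
by rewrite scalerA mulfV // scale1r subrK.
Unshelve. all: by end_near. Qed.
Theorem lemma8 (R : realType) (n : nat)
  (X : set 'rV[R]_n.+1) (J : set R) (f : 'rV[R]_n.+1 -> 'rV[R]_n.+1)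
  (c : ctrl_kind) (xT kon koff : R)
  (xs dxs : R -> 'rV[R]_n.+1) :
  (* J is a (nondegenerate) interval *)
  is_interval J -> (exists a b, J a /\ J b /\ a < b) ->
  (* f is C^1 on X *)
  (forall x, X x -> differentiable f x) ->
  {within X, continuous (Jac f)} ->
  (* every entry of df/dx has constant sign on X *)
  (forall i j x y, X x -> X y -> Num.sg (Jac f x i j) = Num.sg (Jac f y i j)) ->
  (* negative diagonal entries *)
  (forall i x, X x -> Jac f x i i < 0) ->
  0 < xT -> 0 < kon -> 0 < koff ->
  (* assumption (A0) *)
  (forall u0, J u0 -> exists x0, X x0 /\
      Fsys f (gctrl c xT kon koff) x0 u0 = 0 /\
      \rank (Jac (fun x => Fsys f (gctrl c xT kon koff) x u0) x0) = n.+1) ->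
  (* x* : continuously differentiable curve of steady states on J *)
  (forall u, J u -> X (xs u)) ->
  (forall u, J u -> is_deriv_on J xs u (dxs u)) ->
  {within J, continuous dxs} ->
  (forall u, J u -> Fsys f (gctrl c xT kon koff) (xs u) u = 0) ->
  (forall u, J u ->
     Jac (fun x => Fsys f (gctrl c xT kon koff) x u) (xs u) \in unitmx) ->
  forall (u : R) (j : 'I_n.+1), J u ->
  let Js := Jac f (xs u) in
  let x1 := xs u ord0 ord0 in
  (* j is 0-based here: paper's (-1)^j becomes (-1)^(j+1) *)
  dxs u ord0 j =
  match c with
  | Flow => (-1) ^+ j.+1 * minor1 Js j / \det Js
  | Activation => (-1) ^+ j.+1 * (xT - x1) * minor1 Js j
                   / \det (Js - @e11 R n * (u + kon + koff)%:M)
  | Inhibition => (-1) ^+ j.+2 * x1 * minor1 Js j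
                   / \det (Js - @e11 R n * (u + kon + koff)%:M)
  end.
Proof.
move=> iJ Jne dfX _ _ _ _ _ _ _ Xxs dxsH _ Fz uJ u j Ju Js x1.
set g := gctrl c xT kon koff.
pose b := match c with Flow => 0 | _ => -(u + kon + koff) end.
pose b2 : R := match c with Flow => 0 | _ => -1 end.
pose gu0 : R := match c with Flow => 1 | Activation => xT | Inhibition => 0 end.
have gE : forall y1, g u y1 = g u 0 + b * y1.
  by move=> y1; rewrite /g /b; destruct c => /=; ring.
have gh : forall h y1, g (h + u) y1 = g u y1 + h * (gu0 + b2 * y1).
  by move=> h y1; rewrite /g /b2 /gu0; destruct c => /=; ring.
pose e1 : 'rV[R]_n.+1 := delta_mx ord0 ord0.
pose Fu := fun x => Fsys f g x u.
have FuE : Fu = f + (fun v : 'rV[R]_n.+1 => (g u 0 + b * v ord0 ord0) *: e1).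
  by apply/funext => v; rewrite /Fu /Fsys gE.
have [dG dGE] := @diff_aff R n (g u 0) b (xs u).
have df : differentiable f (xs u) := dfX _ (Xxs _ Ju).
have dFu : differentiable Fu (xs u) by rewrite FuE; apply: differentiableD.
have dFuE : forall v, 'd Fu (xs u) v = 'd f (xs u) v + (b * v ord0 ord0) *: e1.
  move=> v. rewrite FuE /e1. have H := diffD df dG.
  apply: (etrans (congr1 (fun F => F v) H)).
  rewrite -dGE; reflexivity.
have JacE : Jac Fu (xs u) = Js + b *: @e11 R n.
  apply/matrixP => i k. rewrite /Jac /jacobian /Js /Jac /jacobian.
  rewrite !mxE.
  apply: (etrans (congr1 (fun M : 'rV[R]_n.+1 => M ord0 i) (dFuE (delta_mx ord0 k)))).
  rewrite !mxE eqxx /= [ord0 == k]eq_sym.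
  by case: (i == ord0); case: (k == ord0); rewrite /= ?mulr1 ?mulr0.
pose Fh := within [set h | J (h + u)] (0:R)^'.
have PF : ProperFilter Fh := @proper_J R J u iJ Jne Ju.
have hne0 : \forall h \near Fh, h != 0.
  have : (dnbhs (0:R)) (fun h => [set h | J (h + u)] h -> h != 0).
    by apply: filterS (nbhs_dnbhs_neq (0:R)) => h hn _.
  exact.
have hJ : \forall h \near Fh, J (h + u).
  have : (dnbhs (0:R)) (fun h => [set h | J (h + u)] h -> J (h + u)).
    by apply: filterE.
  exact.
have F0 : Fh --> (0:R).
  exact: (cvg_trans (cvg_within _) (@nbhs_dnbhs R 0)).
have qd : (fun h => h^-1 *: (xs (h + u) - xs u)) @ Fh --> dxs u := dxsH u Ju.
have L1 := @chain_within R _ _ Fh PF Fu (xs u) (fun h => xs (h + u)) (dxs u) dFu hne0 F0 qd.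
have yc := @path_cvg R _ Fh PF (xs u) (fun h => xs (h + u)) (dxs u) hne0 F0 qd.
pose G2 := fun v : 'rV[R]_n.+1 => (gu0 + b2 * v ord0 ord0) *: (delta_mx ord0 ord0 : 'rV[R]_n.+1).
have [dG2 _] := @diff_aff R n gu0 b2 (xs u).
have L2 : (fun h => - G2 (xs (h + u))) @ Fh --> - G2 (xs u).
  apply: (@cvgN _ _ _ Fh PF).
  exact: (@continuous_cvg _ _ _ Fh PF (fun h => xs (h + u)) G2 (xs u)
    (differentiable_continuous dG2) yc).
have eqF : \forall h \near Fh, h^-1 *: (Fu (xs (h + u)) - Fu (xs u)) = - G2 (xs (h + u)).
  near=> h.
  have hn : h != 0 by near: h.
  have Jh : J (h + u) by near: h.
  have Z := Fz _ Jh.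
  have -> : Fu (xs u) = 0 := Fz _ Ju.
  rewrite subr0 /Fu /Fsys /G2; rewrite /Fsys -/g gh in Z.
  move/eqP: Z; rewrite scalerDl addrA addr_eq0 => /eqP ->.
  by rewrite scalerN scalerA mulrA mulVf // mul1r.
have L1' := cvg_trans (@near_eq_cvg _ _ Fh PF _ _ eqF) L1.
have key : 'd Fu (xs u) (dxs u) = - G2 (xs u).
  exact: (@cvg_unique _ (@norm_hausdorff _ _) _ (fmap_proper_filter _ PF) _ _ L1' L2).
have E1 : 'd Fu (xs u) (dxs u) = dxs u *m (Jac Fu (xs u))^T.
  rewrite /Jac trmxK /jacobian; exact: (esym (mul_rV_lin1 _ _)).
have E3 : - G2 (xs u) = (-(gu0 + b2 * x1)) *: (delta_mx ord0 ord0 : 'rV[R]_n.+1).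
  by rewrite /G2 scaleNr.
have E2 := etrans (esym E1) (etrans key E3).
have := @linalg R n (Jac Fu (xs u)) (dxs u) _ j (uJ u Ju) E2.
rewrite JacE => ->.
have Mn : row' ord0 (col' j (Js + b *: e11 R n)) = row' ord0 (col' j Js).
  apply/matrixP => r s; rewrite !mxE.
  have -> : (lift ord0 r == ord0) = false by apply/negbTE; rewrite eq_sym neq_lift.
  by rewrite /= mulr0 addr0.
rewrite Mn -/(minor1 Js j).
have EA : Js - e11 R n * (u + kon + koff)%:M = Js + (-(u + kon + koff)) *: e11 R n.
  by rewrite -mulmxE mul_mx_scalar scaleNr.
rewrite EA /b /b2 /gu0.
destruct c => /=.
- by rewrite scale0r addr0 exprS; ring.
- by rewrite exprS; ring.
- by rewrite !exprS; ring.
Unshelve. all: by end_near.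
Qed.
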